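(* Let $\mathcal{X}=(\mathcal{X}_t)_{t\ge0}$ be a continuous-time Markov chain on a finite state space $E$ with rate matrix $(Q(i,j))_{i,j\in E}$, and let $W:E\to\mathbb{R}$ be such that $Q(i,j)>0$ implies $W(j)>W(i)$ (a Markov chain with strictly monotone orbits with respect to $W$). Define $\Psi:\mathbb{R}^E\to\mathbb{R}$ by $\Psi(p)=\sum_{i\in E}p(i)W(i)$. Then the forward equation \[ \dot p_t=\sum_{i\in E}\sum_{j\in E}p_t(i)Q(i,j)(j-i) \] for the law $p_t\in\mathbb{R}^E$ of $\mathcal{X}_t$ is equivalent to \[ \dot p_t=K(p_t)\nabla\Psi(p_t), \] where $K$ takes values in the symmetric positive semi-definite $E\times E$ matrices, is continuous on the set $\mathcal{P}(E)$ of probability vectors on $E$, and is smooth on its interior.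
   Context: Vectors in $\mathbb{R}^E$ are written as formal sums $p=\sum_{i\in E}p(i)\,i$, each $i\in E$ being identified with the corresponding standard basis vector; $\nabla$ is the Euclidean gradient on $\mathbb{R}^E$. A rate matrix has nonnegative off-diagonal entries and rows summing to zero. *)

(* Defs.v *)
From HB Require Import structures.
From mathcomp Require Import all_boot all_order all_algebra.
From mathcomp Require Import all_classical all_reals all_analysis.
Set Implicit Arguments. Unset Strict Implicit. Unset Printing Implicit Defensive.
Import Order.TTheory GRing.Theory Num.Theory.
Import numFieldNormedType.Exports.
Local Open Scope classical_set_scope.
Local Open Scope ring_scope.

(* The finite state space E is represented by 'I_n; vectors in R^E are
   row vectors 'rV[R]_n, and p 0 i is the coordinate p(i). *)

Section Defs.
Variable R : realType.

Definition rate_matrix (n : nat) (Q : 'M[R]_n) : Prop :=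
  (forall i j : 'I_n, i != j -> 0 <= Q i j) /\ (forall i : 'I_n, \sum_j Q i j = 0).

Definition prob_vec (n : nat) : set 'rV[R]_n :=
  [set p | (forall i, 0 <= p 0 i) /\ \sum_i p 0 i = 1].

(* open set of vectors with all coordinates positive (open neighbourhood of
   the relative interior of P(E)) *)
Definition pos_orthant (n : nat) : set 'rV[R]_n :=
  [set p | forall i, 0 < p 0 i].

Definition evec (n : nat) (i : 'I_n) : 'rV[R]_n := delta_mx 0 i.

Definition forward_field (n : nat) (Q : 'M[R]_n) (p : 'rV[R]_n) : 'rV[R]_n :=
  \sum_i \sum_j (p 0 i * Q i j) *: (evec j - evec i).

Definition Psi (n : nat) (W : 'I_n -> R) (p : 'rV[R]_n) : R :=
  \sum_i p 0 i * W i.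

Definition grad (n : nat) (f : 'rV[R]_n -> R) (p : 'rV[R]_n) : 'rV[R]_n :=
  \row_i 'D_(evec i) f p.

Fixpoint Ck (n : nat) (k : nat) (U : set 'rV[R]_n) (f : 'rV[R]_n -> R) : Prop :=
  match k with
  | 0 => {within U, continuous f}
  | k'.+1 => (forall x v, U x -> derivable f x v) /\
             (forall v, Ck k' U ('D_v f))
  end.

Definition smooth_on (n : nat) (U : set 'rV[R]_n) (f : 'rV[R]_n -> R) : Prop :=
  forall k, Ck k U f.

Definition sym_psd (n : nat) (M : 'M[R]_n) : Prop :=
  M^T = M /\ forall v : 'cV[R]_n, 0 <= (v^T *m M *m v) 0 0.

End Defs.

(* Main.v *)
Require Import Defs.
From HB Require Import structures.
From mathcomp Require Import all_boot all_order all_algebra.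
From mathcomp Require Import all_classical all_reals all_analysis.
From mathcomp Require Import ring lra.
Import Order.TTheory GRing.Theory Num.Theory.
Import numFieldNormedType.Exports.
Local Open Scope classical_set_scope.
Local Open Scope ring_scope.
Set Implicit Arguments. Unset Strict Implicit. Unset Printing Implicit Defensive.
Section Aux.
Variable R : realType.
Variable n : nat.

Definition lin (a : 'I_n -> R) (p : 'rV[R]_n) : R := \sum_k p 0 k * a k.

Lemma seq_cont (T : Type) (s : seq T) (g : T -> 'rV[R]_n -> R) :
  (forall k, continuous (g k)) -> continuous (fun p => \sum_(k <- s) g k p).
Proof.
move=> hg; elim: s => [|a s IH].
  under eq_fun do rewrite big_nil; exact: cst_continuous.
under eq_fun do rewrite big_cons.
by move=> x; apply: continuousD; [exact: hg | exact: IH].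
Qed.

Lemma lin_cont a : continuous (lin a).
Proof.
apply: seq_cont => k x.
apply: continuousM; last exact: cst_continuous.
exact: (@coord_continuous R 1 n 0 k).
Qed.

Lemma lin_shift a h v x : lin a (h *: v + x) - lin a x = h * lin a v.
Proof.
rewrite /lin mulr_sumr -sumrB; apply: eq_bigr => k _.
by rewrite !mxE; ring.
Qed.

Lemma lin_derive a x v : derivable (lin a) x v /\ 'D_v (lin a) x = lin a v.
Proof.
have H : (fun h : R => h^-1 *: ((lin a \o shift x) (h *: v) - lin a x)) @ 0^' --> lin a v.
  apply: cvg_near_cst; near=> h.
  rewrite /= lin_shift /GRing.scale /= mulrA mulVf ?mul1r //.
  near: h; exact: nbhs_dnbhs_neq.
split; first by apply/cvg_ex; exists (lin a v).
exact: cvg_lim.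
Unshelve. all: by end_near.
Qed.

Lemma Ck_cst k U (c : R) : Ck k U (fun _ : 'rV[R]_n => c).
Proof.
elim: k c => [|k IH] c /=.
  apply: continuous_subspaceT => x; exact: cst_continuous.
split; first by move=> x v _; exact: derivable_cst.
move=> v.
have -> : 'D_v (fun _ : 'rV[R]_n => c) = (fun _ => 0).
  by apply/funext => x; rewrite derive_cst.
exact: IH.
Qed.

Lemma lin_smooth a U : smooth_on U (lin a).
Proof.
case=> [|k] /=.
  apply: continuous_subspaceT; exact: lin_cont.
split; first by move=> x v _; exact: (lin_derive a x v).1.
move=> v.
have -> : 'D_v (lin a) = (fun _ => lin a v).
  by apply/funext => x; rewrite (lin_derive a x v).2.
exact: Ck_cst.
Qed.

End Aux.
Lemma seq_contM (R : realType) n m m' (T : Type) (s : seq T)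
  (g : T -> 'rV[R]_n -> 'M[R]_(m, m')) :
  (forall k, continuous (g k)) -> continuous (fun p => \sum_(k <- s) g k p).
Proof.
move=> hg; elim: s => [|a s IH].
  under eq_fun do rewrite big_nil; exact: cst_continuous.
under eq_fun do rewrite big_cons.
by move=> x; apply: continuousD; [exact: hg | exact: IH].
Qed.
Section Main.
Variable R : realType.
Variable n : nat.
Variable Q : 'M[R]_n.
Variable W : 'I_n -> R.

Definition dd (k l : 'I_n) : 'rV[R]_n := evec R l - evec R k.
Definition cc (k l : 'I_n) : R := if 0 < Q k l then Q k l / (W l - W k) else 0.
Definition AA (k : 'I_n) : 'M[R]_n := \sum_l cc k l *: ((dd k l)^T *m dd k l).
Definition KK (p : 'rV[R]_n) : 'M[R]_n := \sum_k p 0 k *: AA k.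

Lemma KK_entry i j : (fun p => KK p i j) = lin (fun k => AA k i j).
Proof.
apply/funext => p; rewrite /KK /lin summxE; apply: eq_bigr => k _.
by rewrite mxE.
Qed.

Lemma trmx_sumE m m' (s : seq 'I_n) (F : 'I_n -> 'M[R]_(m, m')) :
  (\sum_(k <- s) F k)^T = \sum_(k <- s) (F k)^T.
Proof. exact: raddf_sum. Qed.

Lemma evecE (i k : 'I_n) : evec R i 0 k = (i == k)%:R.
Proof. by rewrite /evec mxE eqxx eq_sym. Qed.

Lemma grad_Psi p : grad (Psi W) p = \row_i W i.
Proof.
apply/rowP => i; rewrite !mxE.
have -> : Psi W = lin W by [].
rewrite (lin_derive W p (evec R i)).2 /lin (bigD1 i) //= big1 ?addr0.
  rewrite evecE eqxx mul1r //.
by move=> k /negbTE ki; rewrite evecE eq_sym ki mul0r.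
Qed.

End Main.
Section Main2.
Variable R : realType.
Variable n : nat.
Variable Q : 'M[R]_n.
Variable W : 'I_n -> R.
Hypothesis hQ : rate_matrix Q.
Hypothesis hW : forall i j : 'I_n, 0 < Q i j -> W i < W j.

Lemma cc_ge0 k l : 0 <= cc Q W k l.
Proof.
rewrite /cc; case: ifP => // h.
by apply: divr_ge0; [exact: ltW | rewrite subr_ge0; exact/ltW/hW].
Qed.

Lemma cc_key k l : (cc Q W k l * (W l - W k)) *: dd R k l = Q k l *: dd R k l.
Proof.
rewrite /cc; case: ifP => h.
  by rewrite divfK // subr_eq0 gt_eqF //; exact: hW.
case: (eqVneq k l) => [->|kl]; first by rewrite /dd !subrr !scaler0.
have := hQ.1 k l kl; rewrite le_eqVlt h orbF => /eqP <-.
by rewrite mul0r !scale0r.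
Qed.

Lemma linW_evec i : lin W (evec R i) = W i.
Proof.
rewrite /lin (bigD1 i) //= big1 ?addr0.
  by rewrite evecE eqxx mul1r.
by move=> k /negbTE ki; rewrite evecE eq_sym ki mul0r.
Qed.

Lemma w_dd k l : (\row_i W i) *m (dd R k l)^T = (W l - W k)%:M.
Proof.
apply/matrixP => a b; rewrite !ord1 !mxE eqxx mulr1n.
rewrite -(linW_evec l) -(linW_evec k) /lin -sumrB; apply: eq_bigr => m _.
by rewrite !mxE; ring.
Qed.

Lemma KK_sym p : (KK Q W p)^T = KK Q W p.
Proof.
rewrite /KK trmx_sumE; apply: eq_bigr => k _.
rewrite linearZ /= /AA trmx_sumE; congr (_ *: _); apply: eq_bigr => l _.
by rewrite linearZ /= trmx_mul trmxK.
Qed.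

Lemma KK_psd p : prob_vec p -> sym_psd (KK Q W p).
Proof.
move=> [p0 _]; split; first exact: KK_sym.
move=> v; rewrite /KK mulmx_sumr mulmx_suml summxE; apply: sumr_ge0 => k _.
rewrite -scalemxAr -scalemxAl mxE; apply: mulr_ge0 => //.
rewrite /AA mulmx_sumr mulmx_suml summxE; apply: sumr_ge0 => l _.
rewrite -scalemxAr -scalemxAl mxE; apply: mulr_ge0; first exact: cc_ge0.
have -> : v^T *m ((dd R k l)^T *m dd R k l) *m v = (dd R k l *m v)^T *m (dd R k l *m v).
  by rewrite trmx_mul !mulmxA.
rewrite mxE; apply: sumr_ge0 => m _; rewrite mxE -expr2; exact: sqr_ge0.
Qed.

Lemma KK_cont : continuous (KK Q W).
Proof.
apply: seq_contM => k x; apply: continuousZr_tmp.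
exact: (@coord_continuous R 1 n 0 k).
Qed.

Lemma KK_eq p : forward_field Q p = (KK Q W p *m (grad (Psi W) p)^T)^T.
Proof.
rewrite grad_Psi trmx_mul trmxK KK_sym /KK mulmx_sumr /forward_field.
apply: eq_bigr => k _; rewrite -scalemxAr /AA mulmx_sumr scaler_sumr.
apply: eq_bigr => l _; rewrite -scalemxAr mulmxA w_dd mul_scalar_mx.
by rewrite -!scalerA [cc Q W k l *: _]scalerA cc_key.
Qed.

End Main2.

Theorem theorem5p2 (R : realType) (n : nat) (Q : 'M[R]_n) (W : 'I_n -> R) :
  rate_matrix Q ->
  (forall i j : 'I_n, 0 < Q i j -> W i < W j) ->
  exists K : 'rV[R]_n -> 'M[R]_n,
    (forall p, @prob_vec R n p -> sym_psd (K p)) /\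
    {within @prob_vec R n, continuous K} /\
    (forall i j : 'I_n, smooth_on (@pos_orthant R n) (fun p => K p i j)) /\
    (forall p, @prob_vec R n p ->
       forward_field Q p = (K p *m (grad (Psi W) p)^T)^T).
Proof.
move=> hQ hW; exists (KK Q W); split; first exact: KK_psd.
split; first by apply: continuous_subspaceT; exact: KK_cont.
split; first by move=> i j; rewrite KK_entry; exact: lin_smooth.
by move=> p _; exact: KK_eq.
Qed.
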